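(* Let $\mathbb{F}\in\{\mathbb{R},\mathbb{C}\}$, let $\{\mathcal{B}_k\}_{k\in K}$ be a maximal set of mutually unbiased bases for $\mathbb{F}^m$, so $|K|=k_{\mathbb{F}}(m)$, and let $\mathbb{S}$ be a collection of subsets of $\{1,\dots,m\}$, each of size $l$. Suppose $\mathcal{F}=\{P^{(k)}_{\mathcal{J}}:k\in K,\ \mathcal{J}\in\mathbb{S}\}$ is a $(2d_{\mathbb{F}}(m),m/2,m)$-fusion frame, where $P^{(k)}_{\mathcal{J}}$ is the $\mathcal{J}$-coordinate projection with respect to $\mathcal{B}_k$. Then $\mathcal{F}$ is a Grassmannian $2$-design if and only if $\mathbb{S}$ is a $2$-$(m,m/2,m/2-1)$ block design.
   Context: Orthonormal bases $\{b_j\},\{b'_j\}$ of $\mathbb{F}^m$ are mutually unbiased if $|\langle b_j,b'_{j'}\rangle|^2=1/m$ for all $j,j'$; a set of mutually unbiased bases consists of pairwise mutually unbiased orthonormal bases, and it is maximal if it has $k_{\mathbb{F}}(m)$ elements, where $k_{\mathbb{R}}(m)=m/2+1$, $k_{\mathbb{C}}(m)=m+1$. Let $d_{\mathbb{F}}(m)=\frac{(m+2)(m-1)}{2}$ if $\mathbb{F}=\mathbb{R}$ and $m^2-1$ if $\mathbb{F}=\mathbb{C}$. The $\mathcal{J}$-coordinate projection with respect to $\{b_j\}$ is $\sum_{j\in\mathcal{J}}b_j\otimes b_j^*$. An $(n,l,m)$-fusion frame is a set of $n$ orthogonal projections onto $l$-dimensional subspaces of $\mathbb{F}^m$ with $A\|x\|^2\le\sum_j\|P_jx\|^2\le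 B\|x\|^2$ for some $0<A\le B$. A fusion frame $\{P_j\}_{j=1}^n$ is a Grassmannian $2$-design if $\sum_jP_j\otimes P_j=\sum_j(UP_jU^* )\otimes(UP_jU^* )$ for every orthogonal (real case) or unitary (complex case) $U$. A $2$-$(m,l,\lambda)$ block design is a collection of $l$-element subsets of $\{1,\dots,m\}$ such that every $2$-element subset is contained in exactly $\lambda$ of them. *)

(* Defs.v *)
From HB Require Import structures.
From mathcomp Require Import all_boot all_order all_algebra.
From mathcomp Require Import complex mxtens.
From mathcomp Require Import reals.
Set Implicit Arguments. Unset Strict Implicit. Unset Printing Implicit Defensive.
Import Order.TTheory GRing.Theory Num.Theory.
Local Open Scope ring_scope.

(* The scalar field F in {R, C}: [Fld R false] is the real field R,
   [Fld R true] is the complex field R[i]. *)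
Definition Fld (R : rcfType) (c : bool) : numFieldType :=
  if c then (R[i] : numFieldType) else (R : numFieldType).

Definition fconj (R : rcfType) (c : bool) : Fld R c -> Fld R c :=
  if c as b return Fld R b -> Fld R b then (fun z : R[i] => z^*)%C else id.

Section Generic.
Variables (T : numFieldType) (cj : T -> T).

Definition adjmx {p q : nat} (A : 'M[T]_(p, q)) : 'M[T]_(q, p) := map_mx cj A^T.

Definition inner {m : nat} (u v : 'cV[T]_m) : T := \sum_(i < m) u i 0 * cj (v i 0).

Definition normsq {m : nat} (u : 'cV[T]_m) : T := inner u u.

Definition onb {m : nat} (B : 'M[T]_m) : Prop :=
  forall i j : 'I_m, inner (col i B) (col j B) = (i == j)%:R.

Definition mub_set {m n : nat} (B : 'I_n -> 'M[T]_m) : Prop :=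
  (forall k, onb (B k)) /\
  forall k k' : 'I_n, k != k' -> forall j j' : 'I_m,
    `|inner (col j (B k)) (col j' (B k'))| ^+ 2 = (m%:R)^-1.

Definition coord_proj {m : nat} (B : 'M[T]_m) (J : {set 'I_m}) : 'M[T]_m :=
  \sum_(j in J) col j B *m adjmx (col j B).

Definition fusion_frame (n l m : nat) (I : finType) (D : {pred I})
    (P : I -> 'M[T]_m) : Prop :=
  #|D| = n /\
  (forall i, i \in D -> [/\ P i *m P i = P i, adjmx (P i) = P i & \rank (P i) = l]) /\
  exists A B : T, [/\ 0 < A, A <= B &
    forall x : 'cV[T]_m,
      A * normsq x <= \sum_(i in D) normsq (P i *m x) <= B * normsq x].

Definition grass2design (m : nat) (I : finType) (D : {pred I})
    (P : I -> 'M[T]_m) : Prop :=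
  forall U : 'M[T]_m, adjmx U *m U = 1%:M ->
    \sum_(i in D) (P i *t P i) =
    \sum_(i in D) ((U *m P i *m adjmx U) *t (U *m P i *m adjmx U)).

End Generic.

(* 2-(m,l,lam) block design on {1..m} (represented as 'I_m) *)
Definition block_design2 (m l lam : nat) (S : {set {set 'I_m}}) : Prop :=
  (forall J, J \in S -> #|J| = l) /\
  forall T : {set 'I_m}, #|T| = 2 -> #|[set J in S | T \subset J]| = lam.

Definition kF (c : bool) (m : nat) : nat := if c then m.+1 else m./2.+1.
Definition dF (c : bool) (m : nat) : nat :=
  if c then (m ^ 2 - 1)%N else ((m + 2) * (m - 1) %/ 2)%N.
Arguments block_design2 : clear implicits.

(* Main.v *)
Require Import Defs.
From HB Require Import structures.
From mathcomp Require Import all_boot all_order all_algebra.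
From mathcomp Require Import complex mxtens.
From mathcomp Require Import reals.
From mathcomp Require Import ring zify.
From mathcomp Require Import perm.
Set Implicit Arguments. Unset Strict Implicit. Unset Printing Implicit Defensive.
Import Order.TTheory GRing.Theory Num.Theory.

Section Comb.
Variables (m : nat) (S : {set {set 'I_m}}).

Definition Ncount (a a' : 'I_m) := #|[set J in S | (a \in J) && (a' \in J)]|.
Definition rcount (a : 'I_m) := #|[set J in S | a \in J]|.

Lemma card_sum (P : pred {set 'I_m}) :
  #|[set J in S | P J]| = \sum_(J in S) P J.
Proof.
rewrite -sum1_card big_mkcond [RHS]big_mkcond; apply: eq_bigr => J _.
by rewrite inE; case: (J \in S); case: (P J).
Qed.

Lemma dc1 a : \sum_(a' < m | a' != a) Ncount a a' = \sum_(J in S | a \in J) (#|J| - 1).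
Proof.
rewrite (eq_bigr (fun a' => \sum_(J in S) ((a \in J) && (a' \in J)))); last first.
  by move=> a' _; rewrite /Ncount (card_sum (fun J => (a \in J) && (a' \in J))).
rewrite exchange_big /= big_mkcondr; apply: eq_bigr => J _.
case: (boolP (a \in J)) => aJ /=; last by rewrite big1 // => a' _; rewrite andFb.
rewrite (cardD1 a J) aJ add1n subSS subn0 -sum1_card big_mkcond [RHS]big_mkcond /=.
apply: eq_bigr => a' _; rewrite !inE andbC.
by case: (a' \in J); case: (a' != a).
Qed.

Lemma dc2 : \sum_a rcount a = \sum_(J in S) #|J|.
Proof.
rewrite (eq_bigr (fun a => \sum_(J in S) (a \in J))); last first.
  by move=> a _; rewrite /rcount (card_sum (fun J => (a \in J))).
rewrite exchange_big /=; apply: eq_bigr => J _.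
by rewrite -sum1_card [RHS]big_mkcond /=; apply: eq_bigr => i _; case: (i \in J).
Qed.

Variable h : nat.
Hypothesis hJ : forall J, J \in S -> #|J| = h.

Lemma dc1h a : \sum_(a' < m | a' != a) Ncount a a' = (rcount a * (h - 1))%N.
Proof.
rewrite dc1 (eq_bigr (fun _ => (h - 1)%N)); last by move=> J /andP [/hJ ->].
rewrite sum_nat_const; congr (_ * _)%N; apply: eq_card => J; rewrite !inE.
by [].
Qed.

Lemma dc2h : \sum_a rcount a = (#|S| * h)%N.
Proof. by rewrite dc2 (eq_bigr (fun _ => h)) ?sum_nat_const // => J /hJ. Qed.

Lemma sum_predC1 (a : 'I_m) c : \sum_(a' < m | a' != a) c = ((m - 1) * c)%N.
Proof.
have hc : #|predC1 a| = (m - 1)%N by rewrite cardC1 card_ord subn1.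
by rewrite -hc -sum_nat_const; apply: eq_bigl => i; rewrite inE.
Qed.

Hypothesis hm : m = h.*2.
Hypothesis h0 : (0 < h)%N.
Hypothesis hS : #|S| = (2 * (m - 1))%N.

Lemma r_const : (forall a a', a != a' -> Ncount a a' = (h - 1)%N) ->
  forall a, rcount a = (m - 1)%N.
Proof.
move=> hN a.
have [h1|h2] := leqP h 1.
  have eh : h = 1%N by apply/eqP; rewrite eqn_leq h1.
  have m2 : m = 2%N by rewrite hm eh.
  have le1 : forall b, (rcount b <= 1)%N.
    move=> b; rewrite /rcount -(cards1 [set b]).
    apply: subset_leq_card; apply/subsetP => J; rewrite !inE => /andP [JS bJ].
    have /cards1P [x Jx] : #|J| == 1%N by rewrite hJ // eh.
    by move: bJ; rewrite Jx inE => /eqP ->.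
  have hsum : \sum_a rcount a = 2%N by rewrite dc2h hS eh m2.
  have e : (m - 1)%N = 1%N by rewrite m2.
  rewrite e; apply/eqP; rewrite eqn_leq le1 /=; apply/negPn/negP => hlt.
  move: hsum; rewrite (bigD1 a) //=; rewrite -ltnNge ltnS leqn0 in hlt.
  rewrite (eqP hlt) add0n => hs2.
  have : (\sum_(i < m | i != a) rcount i <= \sum_(i < m | i != a) 1)%N by apply: leq_sum.
  by rewrite sum_predC1 e hs2.
have := dc1h a; rewrite (eq_bigr (fun _ => (h - 1)%N)); last by move=> b hb; rewrite hN // eq_sym.
rewrite sum_predC1 => /eqP; rewrite eqn_pmul2r ?subn_gt0 // => /eqP.
by move=> <-.
Qed.

Lemma lam_const (a0 a0' : 'I_m) : a0 != a0' ->
  (forall a a' c c', a != a' -> c != c' -> Ncount a a' = Ncount c c') ->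
  Ncount a0 a0' = (h - 1)%N.
Proof.
move=> ha hN.
have e1 : \sum_(b < m) \sum_(b' < m | b' != b) Ncount b b' = (m * ((m - 1) * Ncount a0 a0'))%N.
  rewrite (eq_bigr (fun _ => ((m - 1) * Ncount a0 a0')%N)) ?sum_nat_const ?card_ord //.
  move=> b _; rewrite -(sum_predC1 b); apply: eq_bigr => b' hb'.
  by apply: hN; rewrite // eq_sym.
have e2 : \sum_(b < m) \sum_(b' < m | b' != b) Ncount b b' = (#|S| * h * (h - 1))%N.
  rewrite (eq_bigr (fun b => (rcount b * (h - 1))%N)); last by move=> b _; rewrite dc1h.
  by rewrite -big_distrl /= dc2h.
move: e2; rewrite e1 hS hm => e2.
set N := Ncount a0 a0' in e2 *.
have hq : (h.*2 * (h.*2 - 1) * N = h.*2 * (h.*2 - 1) * (h - 1))%N.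
  rewrite -mulnA e2 -!mul2n; nia.
apply/eqP; move/eqP: hq; rewrite eqn_pmul2l //.
rewrite muln_gt0 double_gt0 h0 /= subn_gt0; lia.
Qed.
End Comb.

Local Open Scope ring_scope.

Section Gen.
Variables (T : numFieldType) (cj : T -> T).
Hypothesis cjD : forall x y, cj (x + y) = cj x + cj y.
Hypothesis cjM : forall x y, cj (x * y) = cj x * cj y.
Hypothesis cjK : forall x, cj (cj x) = x.
Hypothesis cj1 : cj 1 = 1.
Hypothesis normK : forall x, x * cj x = `|x| ^+ 2.

Lemma cj0 : cj 0 = 0.
Proof. by apply: (addrI (cj 0)); rewrite -cjD !addr0. Qed.
Lemma cjN x : cj (- x) = - cj x.
Proof. by apply: (addrI (cj x)); rewrite -cjD !subrr cj0. Qed.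
Lemma cjB x y : cj (x - y) = cj x - cj y.
Proof. by rewrite cjD cjN. Qed.
Lemma cj_sum (I : Type) (r : seq I) (P : pred I) (F : I -> T) :
  cj (\sum_(i <- r | P i) F i) = \sum_(i <- r | P i) cj (F i).
Proof. exact: (big_morph cj cjD cj0). Qed.
Lemma cj_nat n : cj n%:R = n%:R.
Proof. by elim: n => [|n IH]; rewrite ?cj0 // -addn1 natrD cjD IH cj1. Qed.
Lemma cjX x n : cj (x ^+ n) = cj x ^+ n.
Proof. by elim: n => [|n IH]; rewrite ?expr0 ?cj1 // !exprS cjM IH. Qed.
Lemma cjV x : cj (x^-1) = (cj x)^-1.
Proof.
have [->|x0] := eqVneq x 0; first by rewrite invr0 cj0 invr0.
have h : cj x * cj x^-1 = 1 by rewrite -cjM divff // cj1.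
have cx0 : cj x != 0 by apply: contraTneq isT => hx; move: h; rewrite hx mul0r => /eqP; rewrite eq_sym oner_eq0.
by apply: (mulfI cx0); rewrite h divff.
Qed.
Lemma cj_eq0 x : (cj x == 0) = (x == 0).
Proof.
apply/eqP/eqP => [h|->]; last exact: cj0.
by rewrite -[x]cjK h cj0.
Qed.
Lemma normK' x : cj x * x = `|x| ^+ 2.
Proof. by rewrite mulrC normK. Qed.

Local Notation adj := (adjmx cj).

Lemma adjE p q (A : 'M[T]_(p, q)) i j : adj A i j = cj (A j i).
Proof. by rewrite !mxE. Qed.
Lemma adjmxK p q (A : 'M[T]_(p, q)) : adj (adj A) = A.
Proof. by apply/matrixP => i j; rewrite !adjE cjK. Qed.
Lemma adjmxM p q r (A : 'M[T]_(p, q)) (B : 'M[T]_(q, r)) :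
  adj (A *m B) = adj B *m adj A.
Proof.
apply/matrixP => i j; rewrite adjE !mxE cj_sum; apply: eq_bigr => k _.
by rewrite !adjE cjM mulrC.
Qed.
Lemma adjmxD p q (A B : 'M[T]_(p, q)) : adj (A + B) = adj A + adj B.
Proof. by apply/matrixP => i j; rewrite !mxE cjD. Qed.
Lemma adjmxZ p q a (A : 'M[T]_(p, q)) : adj (a *: A) = cj a *: adj A.
Proof. by apply/matrixP => i j; rewrite !mxE cjM. Qed.
Lemma adjmx_sum p q (I : Type) (r : seq I) (P : pred I) (F : I -> 'M[T]_(p, q)) :
  adj (\sum_(i <- r | P i) F i) = \sum_(i <- r | P i) adj (F i).
Proof.
apply/matrixP => i j; rewrite adjE !summxE cj_sum; apply: eq_bigr => k _.
by rewrite adjE.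
Qed.
Lemma adjmx1 p : adj (1%:M : 'M[T]_p) = 1%:M.
Proof. by apply/matrixP => i j; rewrite adjE !mxE eq_sym; case: (_ == _); rewrite ?cj1 ?cj0. Qed.
Lemma adjmx_tens p q r s (A : 'M[T]_(p, q)) (B : 'M[T]_(r, s)) :
  adj (A *t B) = adj A *t adj B.
Proof. by apply/matrixP => i j; rewrite !mxE cjM. Qed.

Lemma innerE m (u v : 'cV[T]_m) : inner cj u v = (adj v *m u) 0 0.
Proof. by rewrite /inner mxE; apply: eq_bigr => i _; rewrite adjE mulrC. Qed.
Lemma inner_sym m (u v : 'cV[T]_m) : inner cj v u = cj (inner cj u v).
Proof. by rewrite /inner cj_sum; apply: eq_bigr => i _; rewrite cjM cjK mulrC. Qed.
Lemma inner_norm m (u v : 'cV[T]_m) : inner cj u v * inner cj v u = `|inner cj u v| ^+ 2.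
Proof. by rewrite [inner cj v u]inner_sym normK. Qed.

Lemma onbP m (B : 'M[T]_m) : onb cj B <-> adj B *m B = 1%:M.
Proof.
split => [h|h i j].
  apply/matrixP => i j; have := h j i; rewrite /inner !mxE eq_sym => <-.
  by apply: eq_bigr => k _; rewrite !mxE mulrC.
move/matrixP: h => /(_ j i); rewrite !mxE /inner eq_sym => <-.
by apply: eq_bigr => k _; rewrite !mxE mulrC.
Qed.
Lemma onb_unit m (B : 'M[T]_m) : onb cj B -> B *m adj B = 1%:M.
Proof. by move/onbP; apply: mulmx1C. Qed.


Lemma col_mulmx p q r (U : 'M[T]_(p, q)) (B : 'M[T]_(q, r)) j :
  col j (U *m B) = U *m col j B.
Proof. by rewrite !colE mulmxA. Qed.

Lemma cp_unit m (U B : 'M[T]_m) J :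
  U *m coord_proj cj B J *m adj U = coord_proj cj (U *m B) J.
Proof.
rewrite /coord_proj mulmx_sumr mulmx_suml; apply: eq_bigr => j _.
by rewrite col_mulmx adjmxM !mulmxA.
Qed.

Lemma inner_unit m (U : 'M[T]_m) (u v : 'cV[T]_m) : adj U *m U = 1%:M ->
  inner cj (U *m u) (U *m v) = inner cj u v.
Proof.
by move=> hU; rewrite !innerE adjmxM -mulmxA (mulmxA (adj U)) hU mul1mx.
Qed.

Lemma mub_unit m n (U : 'M[T]_m) (B : 'I_n -> 'M[T]_m) : adj U *m U = 1%:M ->
  mub_set cj B -> mub_set cj (fun k => U *m B k).
Proof.
move=> hU [hB1 hB2]; split.
  by move=> k i j; rewrite !col_mulmx inner_unit //; apply: hB1.
by move=> k k' hk j j'; rewrite !col_mulmx inner_unit //; apply: hB2.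
Qed.

Definition subB m (B : 'M[T]_m) (J : {set 'I_m}) : 'M[T]_(m, #|J|) :=
  \matrix_(a, t) B a (enum_val t).

Lemma cp_subB m (B : 'M[T]_m) J : coord_proj cj B J = subB B J *m adj (subB B J).
Proof.
apply/matrixP => a b; rewrite /coord_proj summxE !mxE big_enum_val.
apply: eq_bigr => t _; rewrite !mxE big_ord1 !mxE.
done.
Qed.

Lemma subB_unit m (B : 'M[T]_m) J : onb cj B -> adj (subB B J) *m subB B J = 1%:M.
Proof.
move/onbP => /matrixP hB; apply/matrixP => s t.
have := hB (enum_val s) (enum_val t); rewrite !mxE (inj_eq enum_val_inj) => <-.
by apply: eq_bigr => a _; rewrite !mxE.
Qed.

Lemma rank_cp m (B : 'M[T]_m) J : onb cj B -> \rank (coord_proj cj B J) = #|J|.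
Proof.
move=> hB; rewrite cp_subB; apply/eqP; rewrite eqn_leq; apply/andP; split.
  exact: leq_trans (mxrankM_maxl _ _) (rank_leq_col _).
have h1 : \rank (adj (subB B J) *m (subB B J *m adj (subB B J)) *m subB B J) = #|J|.
  by rewrite mulmxA subB_unit // mul1mx subB_unit // mxrank1.
apply: (@leq_trans (\rank (adj (subB B J) *m (subB B J *m adj (subB B J)) *m subB B J))).
  by rewrite h1.
exact: leq_trans (mxrankM_maxl _ _) (mxrankM_maxr _ _).
Qed.

Lemma q_cp m (B : 'M[T]_m) J (x : 'cV[T]_m) :
  (adj x *m coord_proj cj B J *m x) 0 0 =
  \sum_(j in J) inner cj (col j B) x * inner cj x (col j B).
Proof.
rewrite /coord_proj mulmx_sumr mulmx_suml summxE; apply: eq_bigr => j _.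
rewrite !innerE !mulmxA -(mulmxA _ (adj (col j B))) [in LHS]mxE big_ord1.
by [].
Qed.

Definition Eval m (M : 'M[T]_(m * m)) (x y : 'cV[T]_m) :=
  (adj (x *t y) *m M *m (x *t y)) 0 0.

Lemma Eval_sum m (I : Type) (r : seq I) (P : pred I) (F : I -> 'M[T]_(m * m)) x y :
  Eval (\sum_(i <- r | P i) F i) x y = \sum_(i <- r | P i) Eval (F i) x y.
Proof. by rewrite /Eval mulmx_sumr mulmx_suml summxE. Qed.

Lemma Eval_tens m (A C : 'M[T]_m) x y :
  Eval (A *t C) x y = (adj x *m A *m x) 0 0 * (adj y *m C *m y) 0 0.
Proof.
rewrite /Eval adjmx_tens !tensmx_mul !mxE.
set a := (mxtens_unindex _).1; set b := (mxtens_unindex _).2.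
by rewrite [a]ord1 [b]ord1.
Qed.

Definition hs p q (X Y : 'M[T]_(p, q)) := \sum_i \sum_j X i j * cj (Y i j).

Lemma hs_sym p q (X Y : 'M[T]_(p, q)) : hs Y X = cj (hs X Y).
Proof.
rewrite /hs cj_sum; apply: eq_bigr => i _; rewrite cj_sum; apply: eq_bigr => j _.
by rewrite cjM cjK mulrC.
Qed.
Lemma hsDl p q (X Y Z : 'M[T]_(p, q)) : hs (X + Y) Z = hs X Z + hs Y Z.
Proof.
rewrite /hs -big_split; apply: eq_bigr => i _; rewrite -big_split.
by apply: eq_bigr => j _; rewrite mxE mulrDl.
Qed.
Lemma hsNl p q (X Z : 'M[T]_(p, q)) : hs (- X) Z = - hs X Z.
Proof.
rewrite /hs -sumrN; apply: eq_bigr => i _; rewrite -sumrN.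
by apply: eq_bigr => j _; rewrite mxE mulNr.
Qed.
Lemma hsBl p q (X Y Z : 'M[T]_(p, q)) : hs (X - Y) Z = hs X Z - hs Y Z.
Proof. by rewrite hsDl hsNl. Qed.
Lemma hsBr p q (X Y Z : 'M[T]_(p, q)) : hs Z (X - Y) = hs Z X - hs Z Y.
Proof. by rewrite hs_sym hsBl cjB -!hs_sym. Qed.
Lemma hs_suml p q (I : Type) (r : seq I) (P : pred I) (F : I -> 'M[T]_(p, q)) Y :
  hs (\sum_(i <- r | P i) F i) Y = \sum_(i <- r | P i) hs (F i) Y.
Proof.
elim/big_rec2: _ => [|i y M _ <-]; last by rewrite hsDl.
by rewrite /hs big1 // => a _; rewrite big1 // => b _; rewrite mxE mul0r.
Qed.
Lemma hs_sumr p q (I : Type) (r : seq I) (P : pred I) (F : I -> 'M[T]_(p, q)) Y :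
  hs Y (\sum_(i <- r | P i) F i) = \sum_(i <- r | P i) hs Y (F i).
Proof.
rewrite hs_sym hs_suml cj_sum; apply: eq_bigr => i _; by rewrite -hs_sym.
Qed.

Lemma cj_nn x : 0 <= x * cj x.
Proof. by rewrite normK exprn_ge0. Qed.

Lemma hs_eq0 p q (X : 'M[T]_(p, q)) : hs X X = 0 -> X = 0.
Proof.
move=> h; apply/matrixP => i j; rewrite mxE.
have h1 : forall i, 0 <= \sum_j X i j * cj (X i j).
  by move=> i'; apply: sumr_ge0 => j' _; apply: cj_nn.
have h2 := psumr_eq0P (fun i _ => h1 i) h.
have h3 := psumr_eq0P (fun j _ => cj_nn (X i j)) (h2 i isT) (i:=j) isT.
by move: h3; rewrite normK => /eqP; rewrite sqrf_eq0 normr_eq0 => /eqP.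
Qed.

Lemma sum_tens p q (F : 'I_(p * q) -> T) :
  \sum_k F k = \sum_a \sum_b F (mxtens_index (a, b)).
Proof.
rewrite pair_bigA /=.
rewrite (reindex (@mxtens_index p q)) /=; last first.
  by exists (@mxtens_unindex p q) => x _; rewrite ?mxtens_indexK ?mxtens_unindexK.
by apply: eq_bigr => [[a b]].
Qed.

Lemma hs_tens p q r s (A C : 'M[T]_(p, q)) (B D : 'M[T]_(r, s)) :
  hs (A *t B) (C *t D) = hs A C * hs B D.
Proof.
rewrite /hs sum_tens mulr_suml; apply: eq_bigr => a _.
rewrite mulr_suml; under eq_bigr => b _ do rewrite sum_tens.
rewrite exchange_big /=; apply: eq_bigr => c _.
rewrite mulr_sumr; apply: eq_bigr => b _.
rewrite mulr_sumr; apply: eq_bigr => d _.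
by rewrite !tensmxE cjM mulrACA.
Qed.

Lemma rank1E m (x y : 'cV[T]_m) a b : (x *m adj y) a b = x a 0 * cj (y b 0).
Proof. by rewrite mxE big_ord1 adjE. Qed.

Lemma hs_rank1 m (x y u v : 'cV[T]_m) :
  hs (x *m adj y) (u *m adj v) = inner cj x u * inner cj v y.
Proof.
rewrite /hs /inner mulr_suml; apply: eq_bigr => a _.
rewrite mulr_sumr; apply: eq_bigr => b _.
by rewrite !rank1E cjM cjK; ring.
Qed.

Lemma sum_pick n (F : 'I_n -> T) a : (forall c, c != a -> F c = 0) -> \sum_c F c = F a.
Proof. by move=> h; rewrite (bigD1 a) //= big1 ?addr0 // => c; apply: h. Qed.
Arguments sum_pick {n F}.
Lemma natbT : (true%:R : T) = 1. Proof. by []. Qed.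
Lemma natbF : (false%:R : T) = 0. Proof. by []. Qed.

Section T0sec.
Variables (al be : T) (m : nat).

Definition tfun (x z y w : 'I_m) : T :=
  al * ((x == y)%:R * (z == w)%:R + (x == w)%:R * (z == y)%:R) + be * ((x == z)%:R * (y == w)%:R).

Definition T0 : 'M[T]_(m * m) := \matrix_(k, l) tfun (mxtens_unindex k).1 (mxtens_unindex k).2
  (mxtens_unindex l).1 (mxtens_unindex l).2.

Lemma T0E x z y w : T0 (mxtens_index (x, z)) (mxtens_index (y, w)) = tfun x z y w.
Proof. by rewrite mxE !mxtens_indexK. Qed.

Hypothesis cjal : cj al = al.
Hypothesis cjbe : cj be = be.

Lemma cj_tfun x z y w : cj (tfun x z y w) = tfun x z y w.
Proof. by rewrite /tfun !(cjD, cjM, cj_nat, cjal, cjbe). Qed.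

Lemma hs_T0 (X : 'M[T]_(m * m)) : hs X T0 =
  \sum_x \sum_z \sum_y \sum_w X (mxtens_index (x, z)) (mxtens_index (y, w)) * tfun x z y w.
Proof.
rewrite /hs sum_tens; apply: eq_bigr => x _; apply: eq_bigr => z _.
rewrite sum_tens; apply: eq_bigr => y _; apply: eq_bigr => w _.
by rewrite T0E cj_tfun.
Qed.

Lemma sum4_d1 (G : 'I_m -> 'I_m -> 'I_m -> 'I_m -> T) :
  \sum_x \sum_z \sum_y \sum_w G x z y w * ((x == y)%:R * (z == w)%:R) =
  \sum_x \sum_z G x z x z.
Proof.
apply: eq_bigr => x _; apply: eq_bigr => z _.
rewrite (sum_pick x) => [|y hy]; last first.
  by rewrite big1 // => w _; rewrite (eq_sym x y) (negbTE hy) mul0r mulr0.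
rewrite (sum_pick z) => [|w hw]; last by rewrite (eq_sym z w) (negbTE hw) !mulr0.
by rewrite !eqxx !natbT !mulr1.
Qed.

Lemma sum4_d2 (G : 'I_m -> 'I_m -> 'I_m -> 'I_m -> T) :
  \sum_x \sum_z \sum_y \sum_w G x z y w * ((x == w)%:R * (z == y)%:R) =
  \sum_x \sum_z G x z z x.
Proof.
apply: eq_bigr => x _; apply: eq_bigr => z _.
rewrite (sum_pick z) => [|y hy]; last first.
  by rewrite big1 // => w _; rewrite (eq_sym z y) (negbTE hy) !mulr0.
rewrite (sum_pick x) => [|w hw]; last by rewrite (eq_sym x w) (negbTE hw) mul0r mulr0.
by rewrite !eqxx !natbT !mulr1.
Qed.

Lemma sum4_d3 (G : 'I_m -> 'I_m -> 'I_m -> 'I_m -> T) :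
  \sum_x \sum_z \sum_y \sum_w G x z y w * ((x == z)%:R * (y == w)%:R) =
  \sum_x \sum_y G x x y y.
Proof.
apply: eq_bigr => x _.
rewrite [LHS](sum_pick x) => [|z hz]; last first.
  rewrite big1 // => y _; rewrite big1 // => w _.
  by rewrite (eq_sym x z) (negbTE hz) mul0r mulr0.
apply: eq_bigr => y _.
rewrite (sum_pick y) => [|w hw]; last by rewrite (eq_sym y w) (negbTE hw) !mulr0.
by rewrite !eqxx !natbT !mulr1.
Qed.

Lemma sum4_t (G : 'I_m -> 'I_m -> 'I_m -> 'I_m -> T) :
  \sum_x \sum_z \sum_y \sum_w G x z y w * tfun x z y w =
  al * \sum_x \sum_z G x z x z + al * \sum_x \sum_z G x z z x +
  be * \sum_x \sum_y G x x y y.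
Proof.
rewrite -sum4_d1 -sum4_d2 -sum4_d3 !mulr_sumr -!big_split; apply: eq_bigr => x _.
rewrite !mulr_sumr -!big_split; apply: eq_bigr => z _.
rewrite !mulr_sumr -!big_split; apply: eq_bigr => y _.
rewrite !mulr_sumr -!big_split; apply: eq_bigr => w _.
by rewrite /tfun /=; ring.
Qed.

Lemma sum_const_delta (a b : T) :
  \sum_(x < m) \sum_(z < m) (a + b * (x == z)%:R) = a * (m * m)%:R + b * m%:R.
Proof.
have h : forall x : 'I_m, \sum_(z < m) (a + b * (x == z)%:R) = a *+ m + b.
  move=> x; rewrite big_split /= sumr_const card_ord.
  rewrite (sum_pick x) => [|z hz]; last by rewrite (eq_sym x z) (negbTE hz) mulr0.
  by rewrite eqxx natbT mulr1.
rewrite (eq_bigr _ (fun x _ => h x)) sumr_const card_ord natrM; ring.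
Qed.

Lemma sum_neq_const n (c : T) (k : 'I_n) : \sum_(i < n | i != k) c = c *+ n.-1.
Proof.
have hc : #|predC1 k| = n.-1 by rewrite cardC1 card_ord.
by rewrite -hc -sumr_const; apply: eq_bigl => i; rewrite inE.
Qed.

Lemma natb_sq (b : bool) : (b%:R : T) * b%:R = b%:R.
Proof. by case: b; rewrite ?mulr1 ?mulr0. Qed.

Lemma hs_T0T0 : hs T0 T0 =
  al * (al * (m * m)%:R + (al + be) * m%:R) * 2%:R +
  be * (be * (m * m)%:R + (al + al) * m%:R).
Proof.
rewrite hs_T0.
under eq_bigr => x _ do under eq_bigr => z _ do under eq_bigr => y _ do
  under eq_bigr => w _ do rewrite T0E.
rewrite sum4_t.
have e1 : forall x z, tfun x z x z = al + (al + be) * (x == z)%:R.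
  move=> x z; rewrite /tfun !eqxx (eq_sym z x) /= !natb_sq; ring.
have e2 : forall x z, tfun x z z x = al + (al + be) * (x == z)%:R.
  move=> x z; rewrite /tfun !eqxx (eq_sym z x) /= !natb_sq; ring.
have e3 : forall x y, tfun x x y y = be + (al + al) * (x == y)%:R.
  move=> x y; rewrite /tfun !eqxx /= !natb_sq; ring.
under eq_bigr => x _ do under eq_bigr => z _ do rewrite e1.
under [X in _ + al * X + _]eq_bigr => x _ do under eq_bigr => z _ do rewrite e2.
under [X in _ + be * X]eq_bigr => x _ do under eq_bigr => z _ do rewrite e3.
rewrite !sum_const_delta; ring.
Qed.
End T0sec.

Section MUB.
Variables (n m : nat) (B : 'I_n -> 'M[T]_m).
Hypothesis hB : mub_set cj B.
Hypothesis m0 : (0 < m)%N.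

Definition pp k j := col j (B k) *m adj (col j (B k)).
Definition Tt : 'M[T]_(m * m) := \sum_k \sum_j (pp k j *t pp k j).

Lemma inner_same k j j' : inner cj (col j (B k)) (col j' (B k)) = (j == j')%:R.
Proof. by case: hB => h _; apply: h. Qed.

Lemma inner_diff k k' j j' : k != k' ->
  inner cj (col j (B k)) (col j' (B k')) * inner cj (col j' (B k')) (col j (B k)) = m%:R^-1.
Proof. by case: hB => _ h hk; rewrite inner_norm h. Qed.

Lemma hs_pp k j k' j' : hs (pp k j) (pp k' j') =
  inner cj (col j (B k)) (col j' (B k')) * inner cj (col j' (B k')) (col j (B k)).
Proof. by rewrite /pp hs_rank1. Qed.

Lemma m_neq0 : (m%:R : T) != 0.
Proof. by rewrite pnatr_eq0 -lt0n. Qed.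

Lemma hs_TtTt : hs Tt Tt = (n * m)%:R * (1 + n.-1%:R / m%:R).
Proof.
have h : forall k j, \sum_k' \sum_j' hs (pp k j *t pp k j) (pp k' j' *t pp k' j') =
    1 + n.-1%:R / m%:R.
  move=> k j; rewrite (bigD1 k) //=.
  under eq_bigr => j' _ do rewrite hs_tens hs_pp !inner_same.
  rewrite (sum_pick j) => [|j' hj']; last by rewrite (eq_sym j j') (negbTE hj') !mul0r.
  rewrite eqxx natbT !mulr1; congr (_ + _).
  transitivity (\sum_(k' < n | k' != k) \sum_(j' < m) (m%:R^-1 * m%:R^-1 : T)).
    apply: eq_bigr => k' hk'; apply: eq_bigr => j' _.
    by rewrite hs_tens hs_pp inner_diff // eq_sym.
  under eq_bigr => k' _ do rewrite sumr_const card_ord.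
  rewrite sum_neq_const.
  by field; rewrite m_neq0.
rewrite /Tt hs_suml.
under eq_bigr => k _ do rewrite hs_suml.
under eq_bigr => k _ do under eq_bigr => j _ do rewrite hs_sumr.
under eq_bigr => k _ do under eq_bigr => j _ do under eq_bigr => k' _ do rewrite hs_sumr.
under eq_bigr => k _ do under eq_bigr => j _ do rewrite h.
under eq_bigr => k _ do rewrite sumr_const card_ord.
rewrite sumr_const card_ord.
by rewrite natrM; ring.
Qed.

Lemma sumsum_mul (f g : 'I_m -> T) :
  \sum_x \sum_z f x * g z = (\sum_x f x) * (\sum_z g z).
Proof. by rewrite mulr_suml; apply: eq_bigr => x _; rewrite mulr_sumr. Qed.

Variables (al be : T).
Hypothesis cjal : cj al = al.
Hypothesis cjbe : cj be = be.
Hypothesis hOm : forall b : 'cV[T]_m, inner cj b b = 1 ->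
  be * (\sum_x \sum_y (b x 0 * cj (b y 0)) * (b x 0 * cj (b y 0))) = be.

Lemma hs_ppT0 k j : hs (pp k j *t pp k j) (T0 al be m) = al + al + be.
Proof.
rewrite (hs_T0 cjal cjbe).
under eq_bigr => x _ do under eq_bigr => z _ do under eq_bigr => y _ do
  under eq_bigr => w _ do rewrite tensmxE /pp !rank1E.
rewrite sum4_t hOm ?inner_same ?eqxx //.
have e1 := inner_same k j j; rewrite eqxx /inner in e1.
set b := col j (B k) in e1 *.
have e2 : \sum_x \sum_z (b x 0 * cj (b z 0)) * (b z 0 * cj (b x 0)) =
          \sum_x \sum_z (b x 0 * cj (b x 0)) * (b z 0 * cj (b z 0)).
  by apply: eq_bigr => x _; apply: eq_bigr => z _; ring.
rewrite e2 !sumsum_mul e1 natbT mulr1; ring.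
Qed.

Lemma hs_TtT0 : hs Tt (T0 al be m) = (n * m)%:R * (al + al + be).
Proof.
rewrite /Tt hs_suml; under eq_bigr => k _ do rewrite hs_suml.
under eq_bigr => k _ do under eq_bigr => j _ do rewrite hs_ppT0.
under eq_bigr => k _ do rewrite sumr_const card_ord.
by rewrite sumr_const card_ord natrM; ring.
Qed.

Hypothesis Hnum : (n * m)%:R * (1 + n.-1%:R / m%:R) - (n * m)%:R * (al + al + be)
  - (n * m)%:R * (al + al + be) +
  (al * (al * (m * m)%:R + (al + be) * m%:R) * 2%:R +
   be * (be * (m * m)%:R + (al + al) * m%:R)) = 0.

Lemma Tt_eq : Tt = T0 al be m.
Proof.
apply/eqP; rewrite -subr_eq0; apply/eqP; apply: hs_eq0.
rewrite hsBl !hsBr hs_TtTt hs_TtT0 (hs_sym Tt (T0 al be m)) hs_TtT0 hs_T0T0 //.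
rewrite !(cjM, cj_nat, cjD, cjal, cjbe).
by apply: (etrans _ Hnum); ring.
Qed.
End MUB.

Lemma tens_suml p q r s (I : Type) (rr : seq I) (P : pred I) (F : I -> 'M[T]_(p, q))
   (C : 'M[T]_(r, s)) :
  (\sum_(i <- rr | P i) F i) *t C = \sum_(i <- rr | P i) (F i *t C).
Proof.
apply/matrixP => x y; rewrite !mxE !summxE mulr_suml; apply: eq_bigr => i _.
by rewrite !mxE.
Qed.
Lemma tens_sumr p q r s (I : Type) (rr : seq I) (P : pred I) (F : I -> 'M[T]_(p, q))
   (C : 'M[T]_(r, s)) :
  C *t (\sum_(i <- rr | P i) F i) = \sum_(i <- rr | P i) (C *t F i).
Proof.
apply/matrixP => x y; rewrite !mxE !summxE mulr_sumr; apply: eq_bigr => i _.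
by rewrite !mxE.
Qed.
Lemma tensZl p q r s a (A : 'M[T]_(p, q)) (C : 'M[T]_(r, s)) :
  (a *: A) *t C = a *: (A *t C).
Proof. by apply/matrixP => x y; rewrite !mxE mulrA. Qed.
Lemma tensZr p q r s a (A : 'M[T]_(p, q)) (C : 'M[T]_(r, s)) :
  A *t (a *: C) = a *: (A *t C).
Proof. by apply/matrixP => x y; rewrite !mxE mulrCA. Qed.

Lemma cp_sum m (B : 'M[T]_m) J :
  coord_proj cj B J = \sum_j (j \in J)%:R *: (col j B *m adj (col j B)).
Proof.
rewrite /coord_proj big_mkcond /=; apply: eq_bigr => j _.
by case: (j \in J); rewrite ?scale1r ?scale0r.
Qed.

Lemma sum_pp m (B : 'M[T]_m) : onb cj B -> \sum_j (col j B *m adj (col j B)) = 1%:M.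
Proof.
move=> hB; rewrite -(onb_unit hB); apply/matrixP => a b; rewrite summxE mxE.
by apply: eq_bigr => j _; rewrite rank1E !mxE.
Qed.

Section Design.
Variables (n m : nat) (S : {set {set 'I_m}}).

Definition Dp := [pred p : 'I_n * {set 'I_m} | p.2 \in S].
Definition Gd (B : 'I_n -> 'M[T]_m) : 'M[T]_(m * m) :=
  \sum_(i in Dp) (coord_proj cj (B i.1) i.2 *t coord_proj cj (B i.1) i.2).

Lemma Gd_pair B : Gd B =
  \sum_k \sum_(J in S) (coord_proj cj (B k) J *t coord_proj cj (B k) J).
Proof. by rewrite pair_big /=; apply: eq_bigl => p; rewrite inE. Qed.

Lemma sum_count (P : pred {set 'I_m}) :
  \sum_(J in S) (P J)%:R = (#|[set J in S | P J]|%:R : T).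
Proof. by rewrite (card_sum S P) natr_sum. Qed.

Variables (lam h : nat).
Hypothesis hN : forall j j', (Ncount S j j')%:R = lam%:R + h%:R * (j == j')%:R :> T.

Lemma Gd_formula (B : 'I_n -> 'M[T]_m) : mub_set cj B ->
  Gd B = (n * lam)%:R *: (1%:M *t 1%:M) + h%:R *: Tt B.
Proof.
move=> hB; rewrite Gd_pair.
have ek : forall k, \sum_(J in S) (coord_proj cj (B k) J *t coord_proj cj (B k) J) =
    lam%:R *: (1%:M *t 1%:M) + h%:R *: \sum_j (pp B k j *t pp B k j).
  move=> k.
  have e1 : forall J, coord_proj cj (B k) J *t coord_proj cj (B k) J =
      \sum_j \sum_j' (((j \in J) && (j' \in J))%:R *: (pp B k j *t pp B k j')).
    move=> J; rewrite !cp_sum tens_suml; apply: eq_bigr => j _.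
    rewrite tens_sumr; apply: eq_bigr => j' _.
    by rewrite tensZl tensZr scalerA -natrM mulnb.
  rewrite (eq_bigr _ (fun J _ => e1 J)) exchange_big /=.
  under eq_bigr => j _ do rewrite exchange_big /=.
  under eq_bigr => j _ do under eq_bigr => j' _ do rewrite -scaler_suml sum_count.
  have hk := onb_unit (proj1 hB k).
  under eq_bigr => j _ do under eq_bigr => j' _ do rewrite -/(Ncount S j j') hN scalerDl.
  under eq_bigr => j _ do rewrite big_split /=.
  rewrite big_split /=; congr (_ + _).
    under eq_bigr => j _ do rewrite -scaler_sumr.
    rewrite -scaler_sumr; congr (_ *: _).
    rewrite -(sum_pp (proj1 hB k)) tens_suml; apply: eq_bigr => j _.
    by rewrite tens_sumr.
  rewrite scaler_sumr; apply: eq_bigr => j _.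
  rewrite (bigD1 j) //= big1 ?addr0; first by rewrite eqxx natbT mulr1.
  by move=> j' hj'; rewrite (eq_sym j j') (negbTE hj') mulr0 scale0r.
rewrite (eq_bigr _ (fun k _ => ek k)) big_split /= sumr_const card_ord /Tt scaler_sumr.
by congr (_ + _); rewrite scalerMnl natrM mulr_natl.
Qed.

Definition Cst (k0 : 'I_n) : T :=
  \sum_(k < n | k != k0) \sum_(J in S) (#|J|%:R / m%:R) * (#|J|%:R / m%:R).

Lemma Eval_Gd (B : 'I_n -> 'M[T]_m) k0 a a' : mub_set cj B ->
  Eval (Gd B) (col a (B k0)) (col a' (B k0)) = (Ncount S a a')%:R + Cst k0.
Proof.
move=> hB; rewrite Gd_pair Eval_sum (bigD1 k0) //=; congr (_ + _).
  rewrite Eval_sum -sum_count; apply: eq_bigr => J _.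
  have e : forall x, \sum_(j in J) inner cj (col j (B k0)) (col x (B k0)) *
                    inner cj (col x (B k0)) (col j (B k0)) = (x \in J)%:R.
    move=> x; rewrite big_mkcond /= (sum_pick x) => [|j hj].
      by rewrite !inner_same // !eqxx natbT mulr1; case: (x \in J).
    by rewrite !inner_same // (negbTE hj) mul0r; case: (j \in J).
  by rewrite Eval_tens !q_cp !e -natrM mulnb.
apply: eq_bigr => k hk; rewrite Eval_sum; apply: eq_bigr => J _.
have e : forall x, \sum_(j in J) inner cj (col j (B k)) (col x (B k0)) *
                  inner cj (col x (B k0)) (col j (B k)) = #|J|%:R / m%:R.
  move=> x; rewrite (eq_bigr (fun _ => m%:R^-1)); last by move=> j _; rewrite inner_diff.
  by rewrite sumr_const mulr_natl.
by rewrite Eval_tens !q_cp !e.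
Qed.
End Design.

Definition Qm m (s : {perm 'I_m}) : 'M[T]_m := \matrix_(i, j) (i == s j)%:R.

Lemma Qm_unit m (s : {perm 'I_m}) : adj (Qm s) *m Qm s = 1%:M.
Proof.
apply/matrixP => i j; rewrite !mxE (sum_pick (s i)) => [|c hc].
  by rewrite !mxE !eqxx cj_nat (inj_eq perm_inj) natbT mul1r.
by rewrite !mxE (negbTE hc) cj_nat mul0r.
Qed.

Lemma perm_U m (B0 : 'M[T]_m) (s : {perm 'I_m}) : onb cj B0 ->
  (adj (B0 *m Qm s *m adj B0) *m (B0 *m Qm s *m adj B0) = 1%:M) /\
  (forall a, col a ((B0 *m Qm s *m adj B0) *m B0) = col (s a) B0).
Proof.
move=> hB.
split.
  rewrite !adjmxM adjmxK !mulmxA -(mulmxA _ (adj B0) B0) (proj1 (onbP B0) hB) mulmx1.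
  rewrite -(mulmxA _ (adj (Qm s))) Qm_unit mulmx1 onb_unit //.
move=> a; rewrite -(mulmxA _ (adj B0)) (proj1 (onbP B0) hB) mulmx1.
apply/matrixP => x y; rewrite !mxE (sum_pick (s a)) => [|c hc].
  by rewrite !mxE eqxx natbT mulr1.
by rewrite !mxE (negbTE hc) mulr0.
Qed.

Theorem main_gen (n m h : nat) (al be : T) (B : 'I_n -> 'M[T]_m) (S : {set {set 'I_m}}) :
  m = h.*2 -> (0 < h)%N -> (0 < n)%N -> cj al = al -> cj be = be ->
  (forall b : 'cV[T]_m, inner cj b b = 1 ->
    be * (\sum_x \sum_y (b x 0 * cj (b y 0)) * (b x 0 * cj (b y 0))) = be) ->
  (n * m)%:R * (1 + n.-1%:R / m%:R) - (n * m)%:R * (al + al + be)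
    - (n * m)%:R * (al + al + be) +
    (al * (al * (m * m)%:R + (al + be) * m%:R) * 2%:R +
     be * (be * (m * m)%:R + (al + al) * m%:R)) = 0 ->
  mub_set cj B ->
  (forall J, J \in S -> #|J| = h) ->
  #|S| = (2 * (m - 1))%N ->
  (grass2design cj [pred p : 'I_n * {set 'I_m} | p.2 \in S]
     (fun p => coord_proj cj (B p.1) p.2)
   <-> block_design2 m h (h - 1) S).
Proof.
move=> hm h0 n0 cjal cjbe hOm Hnum hB hJ hS.
have m0 : (0 < m)%N by rewrite hm double_gt0.
have hUG : forall U, adj U *m U = 1%:M ->
    \sum_(i in [pred p : 'I_n * {set 'I_m} | p.2 \in S])
      ((U *m coord_proj cj (B i.1) i.2 *m adj U) *t (U *m coord_proj cj (B i.1) i.2 *m adj U))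
    = Gd S (fun k => U *m B k).
  by move=> U hU; apply: eq_bigr => i _; rewrite cp_unit.
have cardT2 : forall a a', a != a' ->
    #|[set J in S | [set a; a'] \subset J]| = Ncount S a a'.
  move=> a a' _; apply: eq_card => J; rewrite !inE subUset !sub1set.
  by [].
split.
  move=> hG; split; first exact: hJ.
  have inv : forall (s : {perm 'I_m}) a a', Ncount S a a' = Ncount S (s a) (s a').
    move=> s a a'; pose k0 := Ordinal n0.
    have [hU hcol] := perm_U s (proj1 hB k0).
    set U := B k0 *m Qm s *m adj (B k0) in hU hcol.
    have hB' := mub_unit hU hB.
    have eG : Gd S B = Gd S (fun k => U *m B k) by rewrite -hUG //; apply: hG.
    have := Eval_Gd S k0 a a' hB'.
    rewrite /= !hcol -eG Eval_Gd // => /addIr /eqP; rewrite eqr_nat => /eqP.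
    by [].
  have cst : forall a a' c c', a != a' -> c != c' -> Ncount S a a' = Ncount S c c'.
    move=> a a' c c' ha hc.
    rewrite (inv (tperm a c)) tpermL.
    have hd : tperm a c a' != c.
      by rewrite -{2}(tpermL a c) (inj_eq perm_inj) eq_sym.
    set d := tperm a c a' in hd *.
    have hc' : c' != c by rewrite eq_sym.
    by rewrite (inv (tperm d c')) tpermL (@tpermD _ d c' c).
  move=> T2 /eqP /cards2P [a [a' [haa' ->]]].
  by rewrite cardT2 //; apply: (lam_const hJ hm h0 hS haa' cst).
move=> [_ hd].
have hN : forall a a', a != a' -> Ncount S a a' = (h - 1)%N.
  by move=> a a' ha; rewrite -cardT2 //; apply: hd; rewrite cards2 ha.
have hr := r_const hJ hm h0 hS hN.
have hN' : forall j j', (Ncount S j j')%:R = (h - 1)%:R + h%:R * (j == j')%:R :> T.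
  move=> j j'; have [<-|hjj] := eqVneq j j'.
    have -> : Ncount S j j = rcount S j by apply: eq_card => J; rewrite !inE andbb.
    rewrite hr natbT mulr1 -natrD; congr (_%:R); rewrite hm -addnn.
    by move: h0; clear; lia.
  by rewrite hN // natbF mulr0 addr0.
move=> U hU; rewrite hUG //; transitivity (Gd S B); first by [].
rewrite (Gd_formula hN' hB) (Gd_formula hN' (mub_unit hU hB)).
by rewrite (Tt_eq hB m0 cjal cjbe hOm Hnum) (Tt_eq (mub_unit hU hB) m0 cjal cjbe hOm Hnum).
Qed.

Theorem final_gen (n m d : nat) (al be : T) (B : 'I_n -> 'M[T]_m) (S : {set {set 'I_m}}) :
  (0 < n)%N -> cj al = al -> cj be = be ->
  (forall b : 'cV[T]_m, inner cj b b = 1 ->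
    be * (\sum_x \sum_y (b x 0 * cj (b y 0)) * (b x 0 * cj (b y 0))) = be) ->
  (forall h, m = h.*2 -> (0 < h)%N ->
    (n * m)%:R * (1 + n.-1%:R / m%:R) - (n * m)%:R * (al + al + be)
    - (n * m)%:R * (al + al + be) +
    (al * (al * (m * m)%:R + (al + be) * m%:R) * 2%:R +
     be * (be * (m * m)%:R + (al + al) * m%:R)) = 0) ->
  (forall h s, m = h.*2 -> (0 < h)%N -> (n * s)%N = d -> s = (2 * (m - 1))%N) ->
  ~~ odd m -> mub_set cj B ->
  fusion_frame cj d m./2 [pred p : 'I_n * {set 'I_m} | p.2 \in S]
    (fun p => coord_proj cj (B p.1) p.2) ->
  (grass2design cj [pred p : 'I_n * {set 'I_m} | p.2 \in S]
     (fun p => coord_proj cj (B p.1) p.2)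
   <-> block_design2 m m./2 (m./2 - 1)%N S).
Proof.
move=> n0 cjal cjbe hOm Hnum hcount hodd hB [hD [hrk _]].
set h := m./2.
have hm : m = h.*2 by rewrite /h -[LHS](odd_double_half m) (negbTE hodd) add0n.
have [h0|hpos] := posnP h.
  rewrite h0 in hm; subst m.
  have c0 : forall J : {set 'I_0}, #|J| = 0%N.
    by move=> J; apply/eqP; rewrite -leqn0; apply: leq_trans (max_card _) _; rewrite card_ord.
  split => _.
    split; first by move=> J _; rewrite c0 /h.
    by move=> T2; rewrite c0.
  move=> U _; apply/matrixP => i; case: i => i hi; exfalso; by move: hi; rewrite muln0.
have hJ : forall J, J \in S -> #|J| = h.
  move=> J hJS; have := hrk (Ordinal n0, J) hJS; case=> _ _ hr.
  transitivity (\rank (coord_proj cj (B (Ordinal n0)) J)); last exact: hr.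
  by rewrite rank_cp //; case: hB => hB1 _; apply: hB1.
have hc : #|[pred p : 'I_n * {set 'I_m} | p.2 \in S]| = (n * #|S|)%N.
  by rewrite -[in RHS](card_ord n) -cardX; apply: eq_card => -[k J]; rewrite !inE.
have hS : #|S| = (2 * (m - 1))%N by apply: (hcount h) => //; rewrite -hc.
exact: (main_gen hm hpos n0 cjal cjbe hOm (Hnum h hm hpos) hB hJ hS).
Qed.
End Gen.

Section Cplx.
Variable R : rcfType.
Local Notation cjC := (@fconj R true).
Lemma cjDC (x y : Fld R true) : cjC (x + y) = cjC x + cjC y.
Proof. exact: (@rmorphD _ _ (@conjc R)). Qed.
Lemma cjMC (x y : Fld R true) : cjC (x * y) = cjC x * cjC y.
Proof. exact: (@rmorphM _ _ (@conjc R)). Qed.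
Lemma cjKC (x : Fld R true) : cjC (cjC x) = x.
Proof. exact: conjcK. Qed.
Lemma cj1C : cjC 1 = 1.
Proof. exact: conjc1. Qed.
Lemma normKC (x : Fld R true) : x * cjC x = `|x| ^+ 2.
Proof. by rewrite /= sqr_normc. Qed.
End Cplx.

Section Real.
Variable R : rcfType.
Local Notation cjR := (@fconj R false).
Lemma cjDR (x y : Fld R false) : cjR (x + y) = cjR x + cjR y. Proof. by []. Qed.
Lemma cjMR (x y : Fld R false) : cjR (x * y) = cjR x * cjR y. Proof. by []. Qed.
Lemma cjKR (x : Fld R false) : cjR (cjR x) = x. Proof. by []. Qed.
Lemma cj1R : cjR 1 = 1. Proof. by []. Qed.
Lemma normKR (x : Fld R false) : x * cjR x = `|x| ^+ 2.
Proof. by rewrite /= (@real_normK R) ?num_real // expr2. Qed.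
End Real.

Theorem theorem3p17 (R : realType) (c : bool) (m l : nat)
    (B : 'I_(kF c m) -> 'M[Fld R c]_m) (S : {set {set 'I_m}}) :
  ~~ odd m ->
  mub_set (@fconj R c) B ->
  (forall J, J \in S -> #|J| = l) ->
  fusion_frame (@fconj R c) (2 * dF c m)%N m./2
    [pred p : 'I_(kF c m) * {set 'I_m} | p.2 \in S]
    (fun p => coord_proj (@fconj R c) (B p.1) p.2) ->
  (grass2design (@fconj R c)
     [pred p : 'I_(kF c m) * {set 'I_m} | p.2 \in S]
     (fun p => coord_proj (@fconj R c) (B p.1) p.2)
   <-> block_design2 m m./2 (m./2 - 1)%N S).
Proof.
move=> hodd hB _ hff.
case: c B hB hff => B hB hff.
  have hN : forall h, m = h.*2 -> (0 < h)%N ->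
    ((m.+1 * m)%:R * (1 + m%:R / m%:R) - (m.+1 * m)%:R * (1 + 1 + 0) -
    (m.+1 * m)%:R * (1 + 1 + 0) +
    (1 * (1 * (m * m)%:R + (1 + 0) * m%:R) * 2%:R +
     0 * (0 * (m * m)%:R + (1 + 1) * m%:R)) : Fld R true) = 0.
    move=> h hm h0.
    have m0 : (m%:R : Fld R true) != 0 by rewrite pnatr_eq0 hm double_eq0 -lt0n.
    rewrite !natrM; field.
    exact: m0.
  have hc : forall h s, m = h.*2 -> (0 < h)%N -> (m.+1 * s)%N = (2 * dF true m)%N ->
      s = (2 * (m - 1))%N.
    move=> h s hm h0; rewrite /dF /=.
    have -> : (2 * (m ^ 2 - 1) = m.+1 * (2 * (m - 1)))%N.
      rewrite hm -mul2n; nia.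
    by move/eqP; rewrite eqn_pmul2l // => /eqP.
  exact: (final_gen (@cjDC R) (@cjMC R) (@cjKC R) (@cj1C R) (@normKC R)
            (al := 1) (be := 0) (ltn0Sn _) (@cj1C R) (@conjc0 R) (fun b _ => mul0r _) hN hc hodd hB hff).
have hOm : forall b : 'cV[Fld R false]_m, inner (@fconj R false) b b = 1 ->
    2^-1 * (\sum_x \sum_y (b x 0 * @fconj R false (b y 0)) * (b x 0 * @fconj R false (b y 0)))
    = 2^-1.
  move=> b hb; rewrite /inner /= in hb *.
  have -> : \sum_x \sum_y (b x 0 * b y 0) * (b x 0 * b y 0) =
            (\sum_x b x 0 * b x 0) * (\sum_y b y 0 * b y 0).
    rewrite mulr_suml; apply: eq_bigr => x _; rewrite mulr_sumr; apply: eq_bigr => y _.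
    ring.
  by rewrite hb !mulr1.
have hN : forall h, m = h.*2 -> (0 < h)%N ->
    ((m./2.+1 * m)%:R * (1 + m./2.+1.-1%:R / m%:R) - (m./2.+1 * m)%:R * (2^-1 + 2^-1 + 2^-1) -
    (m./2.+1 * m)%:R * (2^-1 + 2^-1 + 2^-1) +
    (2^-1 * (2^-1 * (m * m)%:R + (2^-1 + 2^-1) * m%:R) * 2%:R +
     2^-1 * (2^-1 * (m * m)%:R + (2^-1 + 2^-1) * m%:R)) : Fld R false) = 0.
  move=> h hm h0 /=; rewrite hm doubleK.
  have hh : (h%:R : Fld R false) != 0 by rewrite pnatr_eq0 -lt0n.
  rewrite -muln2 !natrM; field.
  by rewrite hh.
have hc : forall h s, m = h.*2 -> (0 < h)%N -> (m./2.+1 * s)%N = (2 * dF false m)%N ->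
    s = (2 * (m - 1))%N.
  move=> h s hm h0; rewrite /dF /= hm doubleK.
  have -> : ((h.*2 + 2) * (h.*2 - 1) = 2 * (h.+1 * (h.*2 - 1)))%N.
    rewrite -mul2n; nia.
  rewrite mulKn // (_ : (2 * (h.+1 * (h.*2 - 1)) = h.+1 * (2 * (h.*2 - 1)))%N); last by nia.
  by move/eqP; rewrite eqn_pmul2l // => /eqP.
exact: (final_gen (@cjDR R) (@cjMR R) (@cjKR R) (@cj1R R) (@normKR R)
          (al := 2^-1) (be := 2^-1) (ltn0Sn _) (erefl _) (erefl _) hOm hN hc hodd hB hff).
Qed.
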